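(* Let $r\ge3$ be an integer and $\lambda\in[\frac15,1]$. Then for all $0<\epsilon\le1$, $f_{r,\lambda}(\epsilon)<\lambda^2$, where $f_{r,\lambda}(\epsilon)=\frac{1}{r-1}\sum_{i=1}^{r-1}\binom{r-1}{i}(1-\epsilon)^{r-1-i}\epsilon^{i-1}\frac{\lambda^2}{\lambda+(1-\lambda)2^{1-i}}$. *)

(* Defs.v *)
From HB Require Import structures.
From mathcomp Require Import all_boot all_order all_algebra.
From mathcomp Require Import reals.
Set Implicit Arguments. Unset Strict Implicit. Unset Printing Implicit Defensive.
Import Order.TTheory GRing.Theory Num.Theory.
Local Open Scope ring_scope.

Definition f_rl (R : realType) (r : nat) (lam eps : R) : R :=
  (r.-1)%:R^-1 * \sum_(1 <= i < r)
    ('C(r.-1, i))%:R * (1 - eps) ^+ (r.-1 - i) * eps ^+ i.-1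
      * (lam ^+ 2 / (lam + (1 - lam) * (2 ^+ i.-1)^-1)).

(* Main.v *)
Require Import Defs.
From HB Require Import structures.
From mathcomp Require Import all_boot all_order all_algebra.
From mathcomp Require Import reals.
From mathcomp Require Import zify ring lra.
Import Order.TTheory GRing.Theory Num.Theory.
Set Implicit Arguments. Unset Strict Implicit.
Local Open Scope ring_scope.

Lemma natkey (i : nat) : (2 <= i)%N -> (5 * 2 ^ i.-1 < i * (2 ^ i.-1 + 4))%N.
Proof.
move: i => [|[|[|[|[|k]]]]] // _.
nia.
Qed.

Lemma realkey (R : realType) (lam : R) (i : nat) : (2 <= i)%N ->
  5^-1 <= lam -> lam <= 1 ->
  1 < i%:R * (lam + (1 - lam) * (2 ^+ i.-1)^-1).
Proof.
move=> hi hl1 hl2.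
have := natkey hi; set k := (2 ^ i.-1)%N => hk.
have hs : (2 ^+ i.-1 : R) = k%:R by rewrite /k natrX.
rewrite hs.
have hk1 : (1 <= k)%N by rewrite /k expn_gt0.
have hkR : 1 <= k%:R :> R by rewrite ler1n.
have hkR' : (5 * k%:R < i%:R * (k%:R + 4) :> R).
  by move: hk; rewrite -(ltr_nat R) !natrM natrD.
have hiR : 0 <= i%:R :> R by [].
set s := k%:R in hkR hkR' *.
set I := i%:R in hiR hkR' *.
have hs0 : 0 < s by lra.
have -> : I * (lam + (1 - lam) * s^-1) = I * (lam * (s - 1) + 1) / s.
  by field; lra.
rewrite ltr_pdivlMr // mul1r.
have h3 : 0 <= I * ((lam - 5^-1) * (s - 1)).
  apply: mulr_ge0 => //; apply: mulr_ge0; lra.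
nra.
Qed.

Lemma Dpos (R : realType) (lam : R) (i : nat) :
  5^-1 <= lam -> lam <= 1 -> 0 < lam + (1 - lam) * (2 ^+ i.-1)^-1.
Proof.
move=> h1 h2.
have : 0 <= (1 - lam) * (2 ^+ i.-1)^-1.
  apply: mulr_ge0; first lra.
  by rewrite invr_ge0 exprn_ge0.
lra.
Qed.

Lemma termle (R : realType) (lam a : R) (i : nat) : (1 <= i)%N ->
  5^-1 <= lam -> lam <= 1 -> 0 <= a ->
  a * (lam ^+ 2 / (lam + (1 - lam) * (2 ^+ i.-1)^-1)) <= a * (i%:R * lam ^+ 2).
Proof.
move=> hi h1 h2 ha.
apply: ler_wpM2l => //.
have hD := Dpos i h1 h2.
rewrite ler_pdivrMr //.
have hk : 1 <= i%:R * (lam + (1 - lam) * (2 ^+ i.-1)^-1).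
  case: i hi hD => [|[|i]] // _ hD.
    by rewrite /= expr0 invr1 mulr1 mul1r; lra.
  by apply/ltW/realkey.
have hl : 0 <= lam ^+ 2 by rewrite sqr_ge0.
rewrite -mulrA [_ ^+ 2 * _]mulrC mulrA.
by rewrite -{1}[lam ^+ 2]mul1r ler_wpM2r.
Qed.

Lemma termlt (R : realType) (lam a : R) (i : nat) : (2 <= i)%N ->
  5^-1 <= lam -> lam <= 1 -> 0 < a ->
  a * (lam ^+ 2 / (lam + (1 - lam) * (2 ^+ i.-1)^-1)) < a * (i%:R * lam ^+ 2).
Proof.
move=> hi h1 h2 ha.
rewrite ltr_pM2l //.
have hD := Dpos i h1 h2.
rewrite ltr_pdivrMr //.
have hk := realkey hi h1 h2.
have hl : 0 < lam ^+ 2 by rewrite exprn_gt0 //; lra.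
rewrite -mulrA [_ ^+ 2 * _]mulrC mulrA.
by rewrite -{1}[lam ^+ 2]mul1r ltr_pM2r.
Qed.

Lemma sumid (R : realType) (m : nat) (eps : R) :
  \sum_(1 <= i < m.+3) ('C(m.+2, i))%:R * (1 - eps) ^+ (m.+2 - i) * eps ^+ i.-1 * i%:R
  = (m.+2)%:R.
Proof.
rewrite big_add1 /= big_mkord.
transitivity (\sum_(i < m.+2) (m.+2)%:R * ((1 - eps) ^+ (m.+1 - i) * eps ^+ i *+ 'C(m.+1, i))).
  apply: eq_bigr => i _.
  rewrite subSS -mulr_natr.
  have hR : ((m.+2)%:R : R) * ('C(m.+1, i))%:R = (i.+1)%:R * ('C(m.+2, i.+1))%:R.
    by rewrite -!natrM mul_bin_diag.
  transitivity (((m.+2)%:R * ('C(m.+1, i))%:R) * ((1 - eps) ^+ (m.+1 - i) * eps ^+ i)); last by ring.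
  rewrite hR; ring.
by rewrite -mulr_sumr -exprDn subrK expr1n mulr1.
Qed.

Theorem mainTheorem7 (R : realType) (r : nat) (lam eps : R) :
  (3 <= r)%N -> 5^-1 <= lam -> lam <= 1 -> 0 < eps -> eps <= 1 ->
  f_rl r lam eps < lam ^+ 2.
Proof.
move: r => [|[|[|m]]] // _ h1 h2 he1 he2.
rewrite /f_rl /=.
set G := fun i : nat => ('C(m.+2, i))%:R * (1 - eps) ^+ (m.+2 - i) * eps ^+ i.-1
   * (i%:R * lam ^+ 2).
have hG : \sum_(1 <= i < m.+3) G i = (m.+2)%:R * lam ^+ 2.
  rewrite /G -(sumid m eps) mulr_suml; apply: eq_bigr => i _; ring.
have hn : 0 < (m.+2)%:R :> R by rewrite ltr0n.
rewrite ltr_pdivrMl // -hG.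
rewrite big_nat_recr //= [X in _ < X]big_nat_recr //=.
apply: ler_ltD.
  apply: ler_sum_nat => i /andP[hi _]; rewrite /G.
  apply: termle => //; apply: mulr_ge0; first apply: mulr_ge0 => //.
  - by apply: exprn_ge0; lra.
  - by apply: exprn_ge0; lra.
rewrite /G subnn expr0 mulr1 binn mul1r.
apply: (@termlt R lam _ m.+2) => //.
by apply: exprn_gt0.
Qed.
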